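(* Let $\mathcal{D}_I$ be the class of all finite irreflexive digraphs. (1) A class $\mathcal{C}\subseteq\mathcal{D}_I$ that is downward closed under the homomorphic image ordering is well quasi-ordered (under that ordering) if and only if it is finite. (2) For any finite set $\{O_1,\dots,O_k\}\subseteq\mathcal{D}_I$, the class $\mathrm{Av}(O_1,\dots,O_k)$, taken with respect to either the standard or the strong homomorphic image ordering, is not well quasi-ordered (under the respective ordering).
   Context: A digraph is a set $D$ with a binary relation $E(D)\subseteq D\times D$; it is irreflexive if no loop $(x,x)$ is an edge. A homomorphism maps edges to edges (so within irreflexive digraphs no edge can be collapsed to a vertex); it is strong if additionally every edge of the target between vertices of the image is the image of an edge. Standard homomorphic image ordering: $A\preceq B$ iff there is a surjective homomorphism $B\to A$; strong: iff there is a surjective strong homomorphism $B\to A$. $\mathrm{Av}(B)=\{x\in\mathcal{D}_I: b\not\preceq x\ \forall b\in B\}$. Well quasi-ordered means no infinite strictly decreasing sequence and no infinite antichain; digraphs considered up to isomorphism (finite means finitely many isomorphism types). *)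

(* Defs.v *)
From Stdlib Require List.
From mathcomp Require Import all_boot.
Set Implicit Arguments. Unset Strict Implicit. Unset Printing Implicit Defensive.

Record digraph := Digraph { dn : nat; de : rel 'I_dn }.
Arguments de : clear implicits.

Definition irrefl_digraph (G : digraph) : Prop := forall x : 'I_(dn G), ~~ de G x x.

Definition is_hom (G H : digraph) (f : 'I_(dn G) -> 'I_(dn H)) : Prop :=
  forall x y, de G x y -> de H (f x) (f y).

Definition is_strong_hom (G H : digraph) (f : 'I_(dn G) -> 'I_(dn H)) : Prop :=
  is_hom f /\
  forall (u v : 'I_(dn H)), (exists a, f a = u) -> (exists b, f b = v) ->
    de H u v -> exists a b, [/\ de G a b, f a = u & f b = v].

Definition surj (A B : Type) (f : A -> B) : Prop := forall y, exists x, f x = y.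

Definition hom_le (A B : digraph) : Prop :=
  exists f : 'I_(dn B) -> 'I_(dn A), is_hom f /\ surj f.

Definition strong_hom_le (A B : digraph) : Prop :=
  exists f : 'I_(dn B) -> 'I_(dn A), is_strong_hom f /\ surj f.

Definition isomorphic (G H : digraph) : Prop :=
  exists f : 'I_(dn G) -> 'I_(dn H),
    bijective f /\ forall x y, de G x y = de H (f x) (f y).

Definition downward_closed (le : digraph -> digraph -> Prop) (C : digraph -> Prop) : Prop :=
  forall A B, irrefl_digraph A -> C B -> le A B -> C A.

Definition finite_class (C : digraph -> Prop) : Prop :=
  exists L : seq digraph, forall G, C G -> exists2 H, List.In H L & isomorphic G H.

Definition wqo (le : digraph -> digraph -> Prop) (C : digraph -> Prop) : Prop :=
  (~ exists s : nat -> digraph,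
       forall i, [/\ C (s i), le (s i.+1) (s i) & ~ le (s i) (s i.+1)]) /\
  (~ exists s : nat -> digraph,
       (forall i, C (s i)) /\ forall i j, i <> j -> ~ le (s i) (s j)).

Definition Av (le : digraph -> digraph -> Prop) (B : seq digraph) (x : digraph) : Prop :=
  irrefl_digraph x /\ forall b, List.In b B -> ~ le b x.

(* Main.v *)
Require Import Defs.
From Stdlib Require List.
From mathcomp Require Import all_boot.
From Stdlib Require Import Classical ClassicalEpsilon.

Set Implicit Arguments. Unset Strict Implicit. Unset Printing Implicit Defensive.

Definition K (n : nat) : digraph := @Digraph n (fun x y => x != y).

Lemma K_irr n : irrefl_digraph (K n).
Proof. by move=> x /=; rewrite eqxx. Qed.

Lemma surj_le a b (f : 'I_b -> 'I_a) : surj f -> a <= b.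
Proof.
move=> hs.
pose g y := proj1_sig (constructive_indefinite_description _ (hs y)).
have gK : cancel g f := fun y => proj2_sig (constructive_indefinite_description _ (hs y)).
rewrite -(card_ord a) -(card_ord b); exact: leq_card (can_inj gK).
Qed.

Lemma inj_le n (B : digraph) (f : 'I_n -> 'I_(dn B)) :
  irrefl_digraph B -> @is_hom (K n) B f -> n <= dn B.
Proof.
move=> ir hf; rewrite -(card_ord n) -(card_ord (dn B)); apply: (@leq_card _ _ f) => x y e.
have [//|nxy] := eqVneq x y.
have := hf x y nxy; rewrite /= e; by rewrite (negbTE (ir _)).
Qed.

Lemma le_K b n : irrefl_digraph b -> hom_le b (K n) -> n <= dn b.
Proof. by move=> ir [f [hf _]]; exact: inj_le ir hf. Qed.

Lemma KK a b : hom_le (K a) (K b) -> a = b.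
Proof.
move=> h; have := le_K (@K_irr a) h; case: h => f [_ s].
have := surj_le s => /= h1 h2; apply/eqP; rewrite eqn_leq h1 h2 //.
Qed.

Lemma hom_le_trans A B C : hom_le A B -> hom_le B C -> hom_le A C.
Proof.
move=> [f [hf sf]] [g [hg sg]]; exists (fun x => f (g x)); split.
  by move=> x y e; apply: hf; apply: hg.
move=> z; case: (sf z) => y <-; case: (sg y) => x <-; by exists x.
Qed.

Lemma iso_le G G' H : isomorphic G H -> isomorphic G' H -> hom_le G G'.
Proof.
move=> [f [[g fK gK] ef]] [f' [[g' f'K g'K] ef']].
exists (fun x => g (f' x)); split.
  move=> x y e; rewrite ef !gK -ef'; exact: e.
move=> z; exists (g' (f z)); by rewrite g'K fK.
Qed.

Lemma pigeon C (s : nat -> digraph) : finite_class C -> (forall i, C (s i)) ->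
  exists i j, i < j /\ hom_le (s i) (s j) /\ hom_le (s j) (s i).
Proof.
move=> [L HL] Cs.
set d := K 0.
have ex i : exists k, k < size L /\ isomorphic (s i) (List.nth k L d).
  case: (HL _ (Cs i)) => H inH iso.
  case: (List.In_nth _ _ d inH) => k [kl e]; exists k; split; last by rewrite e.
  by apply/ltP.
pose g i := proj1_sig (constructive_indefinite_description _ (ex i)).
have gP i : g i < size L /\ isomorphic (s i) (List.nth (g i) L d) :=
  proj2_sig (constructive_indefinite_description _ (ex i)).
pose h (x : 'I_(size L).+1) : 'I_(size L) := Ordinal (proj1 (gP x)).
have : ~~ injectiveb h.
  apply/negP => /injectiveP hi; have := @leq_card _ _ h hi; by rewrite !card_ord ltnn.
case/injectivePn => x [y nxy hxy].
have egh : g x = g y by have := congr1 val hxy.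
have i1 := proj2 (gP x); have i2 := proj2 (gP y); rewrite egh in i1.
have [xy|yx|exy] := ltngtP x y.
- by exists x, y; split => //; split; [apply: iso_le i1 i2 | apply: iso_le i2 i1].
- by exists y, x; split => //; split; [apply: iso_le i2 i1 | apply: iso_le i1 i2].
- by move: nxy; rewrite -val_eqE /= exy eqxx.
Qed.

Lemma In_map (T : eqType) (U : Type) (f : T -> U) (s : seq T) y :
  y \in s -> List.In (f y) (map f s).
Proof.
elim: s => //= a s IH; rewrite in_cons => /orP [/eqP ->|/IH]; by [left|right].
Qed.

Lemma In_flatten (T : eqType) (U : Type) (F : T -> seq U) (s : seq T) y x :
  y \in s -> List.In x (F y) -> List.In x (flatten (map F s)).
Proof.
elim: s => //= a s IH; rewrite in_cons => /orP [/eqP ->|ys] hx;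
  apply/List.in_or_app; [by left| right; exact: IH].
Qed.

Definition mkG k (F : {ffun 'I_k * 'I_k -> bool}) := @Digraph k (fun x y => F (x, y)).

Definition allG N : seq digraph :=
  flatten (map (fun k => [seq mkG F | F : {ffun 'I_k * 'I_k -> bool}]) (iota 0 N.+1)).

Lemma bounded_finite C N : (forall G, C G -> dn G <= N) -> finite_class C.
Proof.
move=> hb; exists (allG N) => G CG.
exists (mkG [ffun p : 'I_(dn G) * 'I_(dn G) => de G p.1 p.2]).
  apply: (@In_flatten _ _ _ _ (dn G)).
    by rewrite mem_iota /= add0n ltnS hb.
  apply: (In_map (fun F : {ffun 'I_(dn G) * 'I_(dn G) -> bool} => mkG F)).
  by rewrite mem_enum.
exists id; split; first exact: (Bijective (g:=id)).
by move=> x y /=; rewrite ffunE.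
Qed.

Lemma le_sum (O : seq digraph) b : List.In b O -> dn b <= sumn (map dn O).
Proof.
elim: O => //= a O IH [->|/IH h]; first exact: leq_addr.
exact: leq_trans h (leq_addl _ _).
Qed.

Lemma strong_hom_le_hom A B : strong_hom_le A B -> hom_le A B.
Proof. by move=> [f [[hf _] s]]; exists f. Qed.

Theorem theorem4p4 :
  (forall C : digraph -> Prop,
     (forall G, C G -> irrefl_digraph G) ->
     downward_closed hom_le C ->
     (wqo hom_le C <-> finite_class C)) /\
  (forall O : seq digraph,
     (forall b, List.In b O -> irrefl_digraph b) ->
     ~ wqo hom_le (Av hom_le O) /\ ~ wqo strong_hom_le (Av strong_hom_le O)).
Proof.
split.
  move=> C irrC dC; split.
  - move=> [_ nanti]; apply: NNPP => nfin.
    have ex N : exists G, C G /\ N < dn G.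
      apply: NNPP => nex; apply: nfin; apply: (bounded_finite (N := N)) => G CG.
      rewrite leqNgt; apply/negP => lt; apply: nex; by exists G.
    pose h N := proj1_sig (constructive_indefinite_description _ (ex N)).
    have hP N : C (h N) /\ N < dn (h N) :=
      proj2_sig (constructive_indefinite_description _ (ex N)).
    pose fix a i := if i is i'.+1 then dn (h (a i')) else dn (h 0).
    have aC i : C (K (a i)).
      case: i => [|i]; [have CG := proj1 (hP 0) | have CG := proj1 (hP (a i))];
      apply: (dC _ _ (@K_irr _) CG); exists id; split; try (by move=> y; exists y);
      move=> x y e /=; apply: contraTneq e => ->; exact: (irrC _ CG y).
    have ainc i j : i < j -> a i < a j.
      elim: j => // j IH; rewrite ltnS leq_eqVlt => /orP [/eqP ->|/IH lt].
        exact: (proj2 (hP _)).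
      exact: ltn_trans lt (proj2 (hP _)).
    apply: nanti; exists (fun i => K (a i)); split => // i j nij /KK e.
    have [lt|gt|eq] := ltngtP i j.
    + by move: (ainc _ _ lt); rewrite e ltnn.
    + by move: (ainc _ _ gt); rewrite e ltnn.
    + by apply: nij; apply/eqP; rewrite eq.
  - move=> fin; split.
    + move=> [s hs].
      have [i [j [lij [hij _]]]] := pigeon fin (fun i => match hs i with And3 c _ _ => c end).
      have down k l : k < l -> hom_le (s l) (s k.+1).
        elim: l => // l IH; rewrite ltnS leq_eqVlt => /orP [/eqP ->|/IH h].
          by exists id; split => // y; exists y.
        by case: (hs l) => _ h' _; apply: hom_le_trans h' h.
      case: (hs i) => _ _; apply; exact: hom_le_trans hij (down _ _ lij).
    + move=> [s [Cs anti]].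
      have [i [j [lij [hij _]]]] := pigeon fin Cs.
      apply: (anti i j) => //; move=> e; by move: lij; rewrite e ltnn.
move=> O irO.
pose N := sumn (map dn O).
have avoid (le : digraph -> digraph -> Prop) :
    (forall A B, le A B -> hom_le A B) ->
    ~ wqo le (Av le O).
  move=> leh [_ nanti]; apply: nanti.
  exists (fun i => K (N + i).+1); split.
    move=> i; split; first exact: K_irr.
    move=> b inb /leh hb; have := le_K (irO _ inb) hb.
    have := le_sum inb; rewrite -/N => h1 h2.
    have := leq_trans h2 h1; by rewrite ltnNge leq_addr.
  move=> i j nij /leh /KK [] /eqP; rewrite eqn_add2l => /eqP; exact: nij.
split; apply: avoid => //; exact: strong_hom_le_hom.
Qed.
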